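(* There is an absolute constant $C>0$ such that the following holds. Let $K$ be a commutative idempotent semiring, $N\geq1$, $\Sigma_N$ the set of $2N+N^2$ commuting indeterminates $\mathsf{c}_i,\mathsf{A}_{ij},\mathsf{b}_j$ ($1\le i,j\le N$), $\mathsf{K}=K[\Sigma_N]$, and $\mathsf{S}_N=\mathsf{c}(\mathsf{A}X)^*\mathsf{b}\in\mathsf{K}[[X]]$ the universal series. Then $\mathsf{S}_N$ can be written as $$\mathsf{S}_N=\mathsf{P}\oplus X^{\kappa_1c_1}\Big(\bigoplus_{1\le i\le\rho}\mathsf{u}_iX^{\mu_i}(\mathsf{q}_iX^{c_1})^*\Big)$$ with $c_1=N!$, $\kappa_1\le C\cdot N!$, $\rho\le 2^{C\cdot N!}$, $0\le\mu_i\le c_1-1$, $\mathsf{u}_i,\mathsf{q}_i\in\mathsf{K}$, $\mathsf{P}\in\mathsf{K}[X]$ of degree less than $\kappa_1c_1$, and such that $m(\mathsf{S}_N):=\max\big(\max_{0\le i<\kappa_1c_1}|\langle\mathsf{P},X^i\rangle|,\max_{1\le i\le\rho}\max(|\mathsf{u}_i|,|\mathsf{q}_i|)\big)\le 2^{C\cdot N!}$.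
   Context: $\mathsf{c}=(\mathsf{c}_i)\in\mathsf{K}^{1\times N}$, $\mathsf{A}=(\mathsf{A}_{ij})\in\mathsf{K}^{N\times N}$, $\mathsf{b}=(\mathsf{b}_j)\in\mathsf{K}^{N\times1}$ are the matrices of indeterminates; $(\mathsf{A}X)^*=\bigoplus_{k\ge0}\mathsf{A}^kX^k$, so $\langle\mathsf{S}_N,X^k\rangle=\mathsf{c}\mathsf{A}^k\mathsf{b}$. For $\mathsf{p}\in K[\Sigma_N]$, $|\mathsf{p}|$ denotes the number of monomials appearing in $\mathsf{p}$; $(aX^c)^*=\bigoplus_{k\ge0}a^kX^{kc}$. *)

(* Defs.v *)
(* Polynomials in the commuting indeterminates Sigma_N over a
   commutative (idempotent) semiring K are represented as finite formal sums of
   terms (monomial, coefficient); two such sums denote the same polynomial iff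
   they have the same coefficient at every monomial ([peq]).  Power series in X
   over K[Sigma_N] are functions nat -> poly (coefficient of X^n). *)
From HB Require Import structures.
From mathcomp Require Import all_boot all_order all_algebra.
Unset Printing Implicit Defensive.
Import GRing.Theory.
Local Open Scope ring_scope.

Notation var N := ('I_N + ('I_N * 'I_N) + 'I_N)%type.
Definition vc {N : nat} (i : 'I_N) : var N := inl (inl i).
Definition vA {N : nat} (i j : 'I_N) : var N := inl (inr (i, j)).
Definition vb {N : nat} (j : 'I_N) : var N := inr j.

Notation mon N := {ffun var N -> nat}.
Definition mon0 (N : nat) : mon N := [ffun => 0%N].
Definition madd {N : nat} (m1 m2 : mon N) : mon N := [ffun s => (m1 s + m2 s)%N].
Definition mvar {N : nat} (v : var N) : mon N := [ffun s => nat_of_bool (s == v)].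

Definition mpoly (K : comPzSemiRingType) (N : nat) := seq (mon N * K)%type.

Definition coef {K : comPzSemiRingType} {N : nat} (p : mpoly K N) (m : mon N) : K :=
  \sum_(t <- p | t.1 == m) t.2.
Definition peq {K : comPzSemiRingType} {N : nat} (p q : mpoly K N) : Prop :=
  forall m, coef p m = coef q m.
Definition psize {K : comPzSemiRingType} {N : nat} (p : mpoly K N) : nat :=
  size (undup [seq t.1 | t <- p & coef p t.1 != 0]).

Definition pzero (K : comPzSemiRingType) (N : nat) : mpoly K N := [::].
Definition pone (K : comPzSemiRingType) (N : nat) : mpoly K N := [:: (mon0 N, 1)].
Definition padd {K : comPzSemiRingType} {N : nat} (p q : mpoly K N) : mpoly K N := p ++ q.
Definition pmul {K : comPzSemiRingType} {N : nat} (p q : mpoly K N) : mpoly K N :=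
  [seq (madd t.1 s.1, t.2 * s.2) | t <- p, s <- q].
Definition ppow {K : comPzSemiRingType} {N : nat} (p : mpoly K N) (j : nat) : mpoly K N :=
  iter j (pmul p) (pone K N).
Definition pvar (K : comPzSemiRingType) {N : nat} (v : var N) : mpoly K N :=
  [:: (mvar v, 1)].

Definition uc (K : comPzSemiRingType) {N : nat} (i : 'I_N) : mpoly K N := pvar K (vc i).
Definition uA (K : comPzSemiRingType) {N : nat} (i j : 'I_N) : mpoly K N := pvar K (vA i j).
Definition ub (K : comPzSemiRingType) {N : nat} (j : 'I_N) : mpoly K N := pvar K (vb j).

Definition rowA (K : comPzSemiRingType) (N : nat) (v : 'I_N -> mpoly K N) (j : 'I_N)
  : mpoly K N := flatten [seq pmul (v i) (uA K i j) | i <- enum 'I_N].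
Definition cAk (K : comPzSemiRingType) (N : nat) (k : nat) : 'I_N -> mpoly K N :=
  iter k (@rowA K N) (@uc K N).

Definition series (K : comPzSemiRingType) (N : nat) := nat -> mpoly K N.

(* The universal series S_N = c (A X)^* b, with <S_N, X^k> = c A^k b. *)
Definition SN (K : comPzSemiRingType) (N : nat) : series K N :=
  fun k => flatten [seq pmul (@cAk K N k j) (ub K j) | j <- enum 'I_N].

Definition sadd {K : comPzSemiRingType} {N : nat} (f g : series K N) : series K N :=
  fun n => padd (f n) (g n).
Definition smul {K : comPzSemiRingType} {N : nat} (f g : series K N) : series K N :=
  fun n => flatten [seq pmul (f i) (g (n - i)%N) | i <- iota 0 n.+1].
Definition smono {K : comPzSemiRingType} {N : nat} (a : mpoly K N) (k : nat) : series K N :=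
  fun n => if n == k then a else pzero K N.
(* (q X^c)^* = (+)_{j >= 0} q^j X^{j c}   (used with c >= 1) *)
Definition sstar {K : comPzSemiRingType} {N : nat} (q : mpoly K N) (c : nat) : series K N :=
  fun n => if (c %| n)%N then ppow q (n %/ c)%N else pzero K N.
Definition ssum {K : comPzSemiRingType} {N : nat} (rho : nat) (F : nat -> series K N)
  : series K N := fun n => flatten [seq F i n | i <- iota 0 rho].

(* Main.v *)
Require Import Defs.
From HB Require Import structures.
From mathcomp Require Import all_boot all_order all_algebra.
From Stdlib Require Import Lia ClassicalEpsilon.
Import GRing.Theory.
Set Implicit Arguments.
Unset Strict Implicit.
Unset Printing Implicit Defensive.

Ltac nlia :=
  repeat match goal with
  | H : is_true (_ <= _) |- _ => move/leP: H => H
  end;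
  try (apply/leP);
  change addn with Nat.add in *; change subn with Nat.sub in *; change muln with Nat.mul in *;
  lia.
Ltac nnia :=
  repeat match goal with
  | H : is_true (_ <= _) |- _ => move/leP: H => H
  end;
  try (apply/leP);
  change addn with Nat.add in *; change subn with Nat.sub in *; change muln with Nat.mul in *;
  nia.

Definition ed {N} (p : seq 'I_N) : seq ('I_N * 'I_N) := zip p (behead p).
Definition emon {N} (es : seq ('I_N * 'I_N)) : mon N :=
  [ffun v => count (fun e => vA e.1 e.2 == v) es].
Definition wm {N} (s : 'I_N) (w : seq 'I_N) : mon N :=
  [ffun v => nat_of_bool (v == vc s) + emon (ed (s :: w)) v + nat_of_bool (v == vb (last s w))].
Definition esupp {N} (x : mon N) (e : 'I_N * 'I_N) : bool := 0 < x (vA e.1 e.2).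

Lemma maddE N (m1 m2 : mon N) v : madd m1 m2 v = m1 v + m2 v.
Proof. by rewrite ffunE. Qed.
Lemma mon0E N v : mon0 N v = 0.
Proof. by rewrite ffunE. Qed.
Lemma maddC N (m1 m2 : mon N) : madd m1 m2 = madd m2 m1.
Proof. by apply/ffunP=> v; rewrite !maddE addnC. Qed.
Lemma maddA N (m1 m2 m3 : mon N) : madd m1 (madd m2 m3) = madd (madd m1 m2) m3.
Proof. by apply/ffunP=> v; rewrite !maddE addnA. Qed.
Lemma madd0m N (m : mon N) : madd (mon0 N) m = m.
Proof. by apply/ffunP=> v; rewrite !maddE mon0E. Qed.
Lemma maddm0 N (m : mon N) : madd m (mon0 N) = m.
Proof. by rewrite maddC madd0m. Qed.

Lemma ed_cons2 N (x y : 'I_N) r : ed [:: x, y & r] = (x, y) :: ed (y :: r).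
Proof. by []. Qed.
Lemma ed_nil N : ed (@nil 'I_N) = [::]. Proof. by []. Qed.
Lemma ed_1 N (x : 'I_N) : ed [:: x] = [::]. Proof. by []. Qed.

Lemma ed_cat N (x : 'I_N) p q : ed (x :: p ++ q) = ed (x :: p) ++ ed (last x p :: q).
Proof.
elim: p x => [|y p IH] x //=.
by rewrite ed_cons2 IH.
Qed.

Lemma ed_split N (p : seq 'I_N) v t : ed (p ++ v :: t) = ed (rcons p v) ++ ed (v :: t).
Proof.
case: p => [|x p] //=.
have -> : x :: p ++ v :: t = x :: (rcons p v ++ t) by rewrite cat_rcons.
rewrite ed_cat -rcons_cons last_rcons; case: t => //; by rewrite cats0.
Qed.

Lemma emon_cat N (a b : seq ('I_N * 'I_N)) : emon (a ++ b) = madd (emon a) (emon b).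
Proof. by apply/ffunP=> v; rewrite maddE !ffunE count_cat. Qed.

Lemma emon_perm N (a b : seq ('I_N * 'I_N)) : perm_eq a b -> emon a = emon b.
Proof. by move=> pab; apply/ffunP=> v; rewrite !ffunE; apply/permP. Qed.

Lemma vA_inj N (a b c d : 'I_N) : (vA a b == vA c d) = ((a, b) == (c, d)).
Proof.
apply/eqP/eqP => [H|[-> ->]] //.
by case: H => -> ->.
Qed.

Lemma esupp_wm N (s : 'I_N) w e : esupp (wm s w) e = (e \in ed (s :: w)).
Proof.
case: e => a b.
rewrite /esupp ffunE !ffunE.
have -> : (vA a b == vc s) = false by [].
have -> : (vA a b == vb (last s w)) = false by [].
rewrite addn0 add0n -has_count.
apply/hasP/idP => [[e' He' /eqP]|He].
  by move/eqP; rewrite vA_inj => /eqP Hee; rewrite -Hee; case: e' He' {Hee}.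
by exists (a, b).
Qed.

Lemma edge_split N (x : 'I_N) l a b : (a, b) \in ed (x :: l) ->
  exists p1 p2, x :: l = p1 ++ a :: b :: p2.
Proof.
elim: l x => [|y l IH] x //=.
rewrite ed_cons2 in_cons => /orP [/eqP [-> ->]|/IH [p1 [p2 ->]]].
  by exists [::], l.
by exists (x :: p1), p2.
Qed.

(* insertion of a closed walk *)
Lemma ins N (s v : 'I_N) w z : last v z = v -> {subset ed (v :: z) <= ed (s :: w)} ->
  exists w', [/\ size w' = size w + size z,
     wm s w' = madd (wm s w) (emon (ed (v :: z))) & ed (s :: w') =i ed (s :: w)].
Proof.
case: z => [|b0 z] Hl Hsub.
  by exists w; rewrite addn0; split => //; apply/ffunP => u; rewrite maddE !ffunE addn0.
have : (v, b0) \in ed (s :: w) by apply: Hsub; rewrite ed_cons2 mem_head.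
case/edge_split => p1 [p2 Hsw].
have [w' Hw'] : exists w', s :: w' = p1 ++ v :: (b0 :: z) ++ b0 :: p2.
  case: p1 Hsw => [|x p1] /= [-> Hw]; first by exists ((b0 :: z) ++ b0 :: p2).
  by exists (p1 ++ v :: (b0 :: z) ++ b0 :: p2).
have Hed : ed (s :: w') = ed (rcons p1 v) ++ ed (v :: (b0 :: z)) ++ ed (v :: b0 :: p2).
  by rewrite Hw' ed_split ed_cat Hl.
have Hed0 : ed (s :: w) = ed (rcons p1 v) ++ ed (v :: b0 :: p2).
  by rewrite Hsw ed_split.
have Hlast : last s w' = last s w.
  by rewrite -(last_cons s s w') -(last_cons s s w) Hw' Hsw !last_cat /= last_cat /=.
exists w'; split.
- move: (congr1 size Hw') (congr1 size Hsw); rewrite /= !size_cat /= !size_cat /=; nlia.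
- apply/ffunP => u; rewrite maddE !ffunE Hlast Hed Hed0 !count_cat.
  nlia.
- move=> e; rewrite Hed Hed0 !mem_cat; apply/idP/idP.
    case/orP => [->//|/orP [He|->]]; last by rewrite orbT.
    by move: (Hsub _ He); rewrite Hed0 mem_cat.
  by case/orP => ->; rewrite ?orbT.
Qed.

Lemma ed_prefix N (p q : seq 'I_N) : {subset ed p <= ed (p ++ q)}.
Proof.
case: p => [|x p] e //= He.
by rewrite ed_cat mem_cat He.
Qed.

Lemma ed_take_mono N (L : seq 'I_N) i j : i <= j -> {subset ed (take i L) <= ed (take j L)}.
Proof.
move=> ij e He.
rewrite -(cat_take_drop i (take j L)) take_takel //.
exact: ed_prefix.
Qed.

Lemma notinj_ord n (T : finType) (f : 'I_n -> T) : #|T| < n ->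
  exists x y : 'I_n, x < y /\ f x = f y.
Proof.
move=> Hc.
have : ~~ injectiveb f.
  apply/negP => /injectiveP Hi; have := leq_card f Hi; rewrite card_ord.
  by move=> H; move: (leq_ltn_trans H Hc); rewrite ltnn.
case/injectivePn => x [y Hxy Hf].
case: (ltngtP x y) => [H|H|H].
- by exists x, y.
- by exists y, x.
- by move: Hxy; rewrite (val_inj H) eqxx.
Qed.

Lemma find_pair N (s : 'I_N) (L : seq 'I_N) : N * (N * N).+1 < size L ->
  exists i j, [/\ i < j, j < size L, nth s L i = nth s L j &
     {subset ed (take j.+1 L) <= ed (take i.+1 L)}].
Proof.
move=> HL.
pose f (k : 'I_(size L)) : 'I_N * 'I_(N * N).+1 :=
  (nth s L k, inord #|ed (take k.+1 L)|).
have Hc : forall k, #|ed (take k L)| <= N * N.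
  move=> k; have := max_card (mem (ed (take k L))).
  by rewrite card_prod card_ord.
have [x [y [Hxy Hf]]] : exists x y : 'I_(size L), x < y /\ f x = f y.
  by apply: notinj_ord; rewrite card_prod !card_ord.
case: Hf => Hn Hcard.
have Hcard' : #|ed (take x.+1 L)| = #|ed (take y.+1 L)|.
  by move: (congr1 val Hcard) => /=; rewrite !inordK // ltnS.
exists x, y; split => //.
have Hsub : ed (take x.+1 L) \subset ed (take y.+1 L).
  by apply/subsetP; apply: ed_take_mono; rewrite ltnS ltnW.
have := subset_leqif_card Hsub.
rewrite Hcard' => -[_ Heq].
by move: Heq; rewrite eqxx => /esym /subsetP.
Qed.

Lemma shortn N (s : 'I_N) (L : seq 'I_N) n : forall i j, j - i <= n -> i < j -> j < size L ->
  nth s L i = nth s L j -> {subset ed (take j.+1 L) <= ed (take i.+1 L)} ->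
  exists i' j', [/\ i' < j', j' < size L, j' - i' <= N, nth s L i' = nth s L j' &
     {subset ed (take j'.+1 L) <= ed (take i'.+1 L)}].
Proof.
elim: n => [|n IH] i j Hd Hij HjL Hn Hsub.
  by move: Hd; rewrite leqn0 subn_eq0 leqNgt Hij.
case: (leqP (j - i) N) => HN; first by exists i, j.
pose g (k : 'I_(j - i)) := nth s L (i + k).
have [x [y [Hxy Hg]]] : exists x y : 'I_(j - i), x < y /\ g x = g y by apply: notinj_ord; rewrite card_ord.
have Hy : y < j - i := ltn_ord y.
apply: (IH (i + x) (i + y)) => //.
- nlia.
- by rewrite ltn_add2l.
- nlia.
- move=> e He.
  apply: (@ed_take_mono _ _ (i.+1)); first by rewrite -addSn leq_addr.
  apply: Hsub; apply: (@ed_take_mono _ _ (i + y).+1) => //; nlia.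
Qed.

Lemma decomp N (s : 'I_N) (L : seq 'I_N) i j : i < j -> j < size L -> nth s L i = nth s L j ->
  exists p1 v z p2, [/\ L = p1 ++ v :: z ++ p2, last v z = v, size z = j - i,
     take i.+1 L = rcons p1 v & take j.+1 L = p1 ++ v :: z].
Proof.
move=> ij jL Hn.
have iL : i < size L by apply: ltn_trans ij jL.
pose v := nth s L i.
have Hd : drop i L = v :: drop i.+1 L by rewrite (drop_nth s).
exists (take i L), v, (take (j - i) (drop i.+1 L)), (drop (j - i) (drop i.+1 L)).
have Hsz : size (take (j - i) (drop i.+1 L)) = j - i.
  by rewrite size_takel // size_drop; nlia.
split => //.
- by rewrite cat_take_drop -Hd cat_take_drop.
- rewrite (last_nth s) Hsz.
  have -> : v :: take (j - i) (drop i.+1 L) = take (j - i).+1 (drop i L) by rewrite Hd.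
  rewrite nth_take // nth_drop subnKC; [by rewrite /v Hn | exact: ltnW].
- by rewrite (take_nth s).
- have -> : j.+1 = i + (j - i).+1 by nlia.
  by rewrite takeD Hd.
Qed.


Lemma remove1 N (s : 'I_N) w : N * (N * N).+1 < (size w).+1 ->
  exists w' v z, [/\ size w = size w' + size z, 0 < size z <= N, last v z = v,
    {subset ed (v :: z) <= ed (s :: w')} &
    ed (s :: w') =i ed (s :: w) /\ wm s w = madd (wm s w') (emon (ed (v :: z)))].
Proof.
move=> Hsz.
have [i [j [ij jL Hn Hsub]]] := @find_pair N s (s :: w) Hsz.
have [i' [j' [ij' jL' HN Hn' Hsub']]] := @shortn N s (s :: w) (j - i) i j (leqnn (j - i)) ij jL Hn Hsub.
have [p1 [v [z [p2 [HL Hl Hz Hti Htj]]]]] := @decomp N s (s :: w) i' j' ij' jL' Hn'.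
have [w' Hw'] : exists w', s :: w' = p1 ++ v :: p2.
  case: p1 HL {Hti Htj} => [|x p1] /= [-> Hw]; first by exists p2.
  by exists (p1 ++ v :: p2).
have Hed0 : ed (s :: w) = ed (rcons p1 v) ++ ed (v :: z) ++ ed (v :: p2).
  by rewrite HL ed_split ed_cat Hl.
have Hed : ed (s :: w') = ed (rcons p1 v) ++ ed (v :: p2) by rewrite Hw' ed_split.
have Hsubz : {subset ed (v :: z) <= ed (rcons p1 v)}.
  move=> e He; rewrite -Hti; apply: Hsub'; rewrite Htj ed_split mem_cat He orbT //.
have Hlast : last s w' = last s w.
  by rewrite -(last_cons s s w') -(last_cons s s w) Hw' HL !last_cat /= last_cat /= Hl.
exists w', v, z; split => //.
- move: (congr1 size Hw') (congr1 size HL); rewrite /= !size_cat /= !size_cat /=; nlia.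
- by rewrite Hz subn_gt0 ij'.
- by move=> e He; rewrite Hed mem_cat Hsubz.
split.
- move=> e; rewrite Hed Hed0 !mem_cat; apply/idP/idP.
    by case/orP => ->; rewrite ?orbT.
  by case/orP => [->//|/orP [/Hsubz ->|->]]; rewrite ?orbT.
- apply/ffunP => u; rewrite maddE !ffunE Hlast Hed Hed0 !count_cat; nlia.
Qed.

Definition cwm {N} (c : 'I_N * seq 'I_N) : mon N := emon (ed (c.1 :: c.2)).
Definition msum {N} (cs : seq ('I_N * seq 'I_N)) : mon N :=
  [ffun u => \sum_(c <- cs) cwm c u].
Definition csz {N} (cs : seq ('I_N * seq 'I_N)) : nat := sumn (map (fun c => size c.2) cs).

Lemma msum_nil N : msum [::] = mon0 N.
Proof. by apply/ffunP => u; rewrite !ffunE big_nil. Qed.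
Lemma msum_cons N (c : 'I_N * seq 'I_N) cs : msum (c :: cs) = madd (cwm c) (msum cs).
Proof. apply/ffunP => u; rewrite maddE !ffunE big_cons; by rewrite /cwm ffunE. Qed.
Lemma msum_cat N (a b : seq ('I_N * seq 'I_N)) : msum (a ++ b) = madd (msum a) (msum b).
Proof. by apply/ffunP => u; rewrite maddE !ffunE big_cat. Qed.
Lemma msum_perm N (a b : seq ('I_N * seq 'I_N)) : perm_eq a b -> msum a = msum b.
Proof. by move=> pab; apply/ffunP => u; rewrite !ffunE (perm_big _ pab). Qed.
Lemma csz_cat N (a b : seq ('I_N * seq 'I_N)) : csz (a ++ b) = csz a + csz b.
Proof. by rewrite /csz map_cat sumn_cat. Qed.
Lemma csz_perm N (a b : seq ('I_N * seq 'I_N)) : perm_eq a b -> csz a = csz b.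
Proof. by move=> pab; apply: perm_sumn; apply: perm_map. Qed.

Lemma mem_body_fix (T : eqType) (c c' : T) cs : c' \in cs -> c' \in c :: cs.
Proof. by move=> H; rewrite in_cons H orbT. Qed.

Inductive Cl N (E : pred ('I_N * 'I_N)) : nat -> mon N -> Prop :=
| Cl0 : Cl E 0 (mon0 N)
| ClS l y v z : Cl E l y -> last v z = v -> {subset ed (v :: z) <= E} ->
    Cl E (l + size z) (madd y (emon (ed (v :: z)))).

Lemma Cl_mono N (E1 E2 : pred ('I_N * 'I_N)) l y :
  (forall e, E1 e -> E2 e) -> Cl E1 l y -> Cl E2 l y.
Proof.
move=> H; elim => [|l' y' v z _ IH Hl Hs]; first exact: Cl0.
by apply: ClS => // e /Hs /H.
Qed.

Lemma Cl_ins N (E : pred ('I_N * 'I_N)) l y s w : Cl E l y ->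
  (forall e, E e -> e \in ed (s :: w)) ->
  exists w', [/\ size w' = size w + l, wm s w' = madd (wm s w) y & ed (s :: w') =i ed (s :: w)].
Proof.
move=> HC HE; elim: HC => [|l' y' v z _ [w1 [H1 H2 H3]] Hl Hs].
  by exists w; rewrite addn0 maddm0.
have Hsub : {subset ed (v :: z) <= ed (s :: w1)} by move=> e /Hs /HE; rewrite H3.
have [w2 [H4 H5 H6]] := ins Hl Hsub.
exists w2; split.
- by rewrite H4 H1 addnA.
- by rewrite H5 H2 maddA.
- by move=> e; rewrite H6 H3.
Qed.

Lemma Cl_of_list N (E : pred ('I_N * 'I_N)) (cs : seq ('I_N * seq 'I_N)) :
  (forall c, c \in cs -> last c.1 c.2 = c.1 /\ {subset ed (c.1 :: c.2) <= E}) ->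
  Cl E (csz cs) (msum cs).
Proof.
elim: cs => [|c cs IH] H; first by rewrite msum_nil; exact: Cl0.
have [Hl Hs] := H c (mem_head _ _).
have IH' := IH (fun c' Hc' => H c' (mem_body_fix c Hc')).
rewrite msum_cons maddC /csz /= addnC.
exact: ClS.
Qed.

Lemma remove_many N M (s : 'I_N) w : N * (N * N).+1 + N * M < (size w).+1 ->
  exists w' cs, [/\ size cs = M,
    (forall c, c \in cs -> [/\ 0 < size c.2 <= N, last c.1 c.2 = c.1 &
                                {subset ed (c.1 :: c.2) <= ed (s :: w')}]),
    ed (s :: w') =i ed (s :: w), wm s w = madd (wm s w') (msum cs) &
    size w = size w' + csz cs].
Proof.
elim: M w => [|M IH] w Hsz.
  exists w, [::]; split => //; by rewrite ?msum_nil ?maddm0 ?addn0.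
have [w1 [v [z [H1 H2 H3 H4 [H5 H6]]]]] := remove1 s (leq_ltn_trans (leq_addr _ _) Hsz).
have Hsz1 : N * (N * N).+1 + N * M < (size w1).+1.
  move: H2 => /andP [_ H2]; nlia.
have [w' [cs [K1 K2 K3 K4 K5]]] := IH w1 Hsz1.
exists w', ((v, z) :: cs); split => /=.
- by rewrite K1.
- move=> c; rewrite in_cons => /orP [/eqP -> /=|/K2 //].
  by split => // e /H4; rewrite K3.
- by move=> e; rewrite K3 H5.
- by rewrite msum_cons H6 K4 /cwm /= [madd (emon _) _]maddC maddA.
- apply: (eq_trans H1); rewrite K5 /csz /= -addnA; congr (_ + _); exact: addnC.
Qed.

Lemma size_le_sumcount (X : Type) N (cs : seq X) (f : X -> nat) :
  (forall c, c \in map f cs -> 0 < c <= N) ->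
  size cs <= \sum_(l <- iota 1 N) count (fun c => f c == l) cs.
Proof.
elim: cs => [|c cs IH] H /=; first by [].
rewrite big_split /=.
have H1 : 1 <= \sum_(l <- iota 1 N) (f c == l).
  rewrite (bigD1_seq (f c)) /= ?iota_uniq ?eqxx //.
  by rewrite mem_iota; have := H (f c) (mem_head _ _); rewrite add1n.
have H2 := IH (fun c' Hc' => H c' (mem_body_fix (f c) Hc')).
rewrite -add1n; exact: leq_add.
Qed.

Lemma pigeon (X : Type) N F (cs : seq X) (f : X -> nat) : 0 < N -> 0 < F ->
  (forall c, c \in map f cs -> 0 < c <= N) -> N * F <= size cs ->
  exists l, 0 < l <= N /\ F <= count (fun c => f c == l) cs.
Proof.
move=> HN HF Hf Hs.
have : ~~ all (fun l => count (fun c => f c == l) cs < F) (iota 1 N).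
  apply/negP => /allP Hall.
  have H1 := size_le_sumcount Hf.
  have H2 : \sum_(l <- iota 1 N) count (fun c => f c == l) cs <= \sum_(l <- iota 1 N) F.-1.
    rewrite big_seq [X in _ <= X]big_seq; apply: leq_sum => l Hl.
    by have := Hall l Hl; case: F HF {Hs Hall}.
  move: H2; rewrite big_const_seq count_predT size_iota iter_addn_0 => H2.
  have := leq_trans Hs (leq_trans H1 H2).
  case: F HF {Hs Hall H2} => // F' _; rewrite /= mulnS mulnC => H; nlia.
case/allPn => l; rewrite mem_iota add1n -leqNgt => Hl Hc.
by exists l.
Qed.

Lemma csz_const N (p : seq ('I_N * seq 'I_N)) l : (forall c, c \in p -> size c.2 = l) ->
  csz p = size p * l.
Proof.
elim: p => [|c p IH] H //=.
have -> : csz (c :: p) = size c.2 + csz p by [].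
rewrite IH; last by move=> c' Hc'; apply: H; rewrite in_cons Hc' orbT.
by rewrite H ?mem_head // mulSn.
Qed.

Lemma step N F (s : 'I_N) w : 0 < N -> 0 < F -> (forall l, 0 < l <= N -> l %| F) ->
  N * (N * N).+1 + N * (N * F) < (size w).+1 ->
  exists w'' y, [/\ size w = size w'' + F, wm s w = madd (wm s w'') y,
     Cl (mem (ed (s :: w''))) F y & ed (s :: w'') =i ed (s :: w)].
Proof.
move=> HN HF Hdiv Hsz.
have [w' [cs [K1 K2 K3 K4 K5]]] := remove_many s Hsz.
have [l [Hl Hc]] : exists l, 0 < l <= N /\ F <= count (fun c => size c.2 == l) cs.
  apply: pigeon => //; last by rewrite K1.
  by move=> x /mapP [c Hc ->]; have [] := K2 c Hc.
pose cl := [seq c <- cs | size c.2 == l].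
pose k := F %/ l.
pose picked := take k cl.
pose rest := drop k cl ++ [seq c <- cs | predC (fun c => size c.2 == l) c].
have Hperm : perm_eq (picked ++ rest) cs.
  by rewrite catA cat_take_drop perm_filterC.
have Hin : forall c, c \in picked ++ rest -> c \in cs by move=> c; rewrite (perm_mem Hperm).
have Hpick : csz picked = F.
  rewrite (@csz_const _ _ l).
    rewrite size_takel; first by rewrite divnK // Hdiv.
    by rewrite size_filter (leq_trans (leq_div _ _) Hc).
  by move=> c /mem_take; rewrite mem_filter => /andP [/eqP].
have Hrest : Cl (mem (ed (s :: w'))) (csz rest) (msum rest).
  apply: Cl_of_list => c Hc0.
  have [_ H1 H2] : [/\ 0 < size c.2 <= N, last c.1 c.2 = c.1 &
                                {subset ed (c.1 :: c.2) <= ed (s :: w')}].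
    by apply: K2; apply: Hin; rewrite mem_cat Hc0 orbT.
  by split.
have [w'' [L1 L2 L3]] := Cl_ins Hrest (fun e (He : e \in ed (s :: w')) => He).
exists w'', (msum picked); split.
- rewrite K5 L1 -(csz_perm Hperm) csz_cat Hpick; nlia.
- by rewrite K4 L2 -(msum_perm Hperm) msum_cat [madd (msum picked) _]maddC maddA.
- rewrite -Hpick; apply: Cl_of_list => c Hc0.
  have [_ H1 H2] : [/\ 0 < size c.2 <= N, last c.1 c.2 = c.1 &
                                {subset ed (c.1 :: c.2) <= ed (s :: w')}].
    by apply: K2; apply: Hin; rewrite mem_cat Hc0.
  by split => // e /H2; rewrite /= L3.
- by move=> e; rewrite L3 K3.
Qed.

Fixpoint PowP N (Q : mon N -> Prop) (j : nat) (m : mon N) : Prop :=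
  match j with
  | 0 => m = mon0 N
  | j'.+1 => exists y m', [/\ Q y, PowP Q j' m' & m = madd y m']
  end.

Lemma pow_walk N F (s : 'I_N) w j s' : PowP (Cl (esupp (wm s w)) F) j s' ->
  exists w', [/\ size w' = size w + j * F, wm s w' = madd (wm s w) s' & ed (s :: w') =i ed (s :: w)].
Proof.
elim: j s' => [|j IH] s' /=.
  by move=> ->; exists w; rewrite mul0n addn0 maddm0.
case=> y [m' [Hy Hm' ->]].
have [w1 [H1 H2 H3]] := IH m' Hm'.
have [w2 [H4 H5 H6]] : exists w2, [/\ size w2 = size w1 + F, wm s w2 = madd (wm s w1) y
     & ed (s :: w2) =i ed (s :: w1)].
  apply: (Cl_ins Hy) => e; rewrite esupp_wm H3 //.
exists w2; split.
- rewrite H4 H1 mulSn; nlia.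
- by rewrite H5 H2 -maddA [madd m' y]maddC.
- by move=> e; rewrite H6 H3.
Qed.

Lemma walk_pow N F L (s : 'I_N) w j : 0 < N -> 0 < F -> (forall l, 0 < l <= N -> l %| F) ->
  N * (N * N).+1 + N * (N * F) <= L -> size w = L + j * F ->
  exists w0 s', [/\ size w0 = L, ed (s :: w0) =i ed (s :: w),
     PowP (Cl (esupp (wm s w0)) F) j s' & wm s w = madd (wm s w0) s'].
Proof.
move=> HN HF Hdiv HL.
elim: j w => [|j IH] w Hw.
  by exists w, (mon0 N); split => //; rewrite ?Hw ?mul0n ?addn0 ?maddm0.
have Hsz : N * (N * N).+1 + N * (N * F) < (size w).+1.
  rewrite Hw mulSn; nlia.
have [w1 [y [H1 H2 H3 H4]]] := step s HN HF Hdiv Hsz.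
have Hw1 : size w1 = L + j * F by move: H1; rewrite Hw mulSn; nlia.
have [w0 [m' [K1 K2 K3 K4]]] := IH w1 Hw1.
exists w0, (madd y m'); split => //.
- by move=> e; rewrite K2 H4.
- exists y, m'; split => //.
  apply: Cl_mono H3 => e /= He; rewrite esupp_wm K2 //.
- by rewrite H2 K4 -maddA [madd m' y]maddC.
Qed.

Definition mons {K : comPzSemiRingType} {N} (p : mpoly K N) : seq (mon N) := map fst p.
Definition ones {K : comPzSemiRingType} {N} (p : mpoly K N) : bool := all (fun t => t.2 == 1%R) p.

Lemma coef_ones (K : comPzSemiRingType) N (p : mpoly K N) m :
  (forall x : K, (x + x = x)%R) -> ones p ->
  coef p m = if m \in mons p then 1%R else 0%R.
Proof.
move=> Hid; rewrite /coef /mons.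
elim: p => [|t p IH] /=; first by rewrite big_nil.
case/andP => /eqP Ht Hp; rewrite big_cons in_cons IH // Ht.
case: (eqVneq t.1 m) => [Heq|Hne] /=; last by [].
by case: (m \in _); rewrite ?Hid ?addr0.
Qed.

Lemma peq_ones (K : comPzSemiRingType) N (p q : mpoly K N) :
  (forall x : K, (x + x = x)%R) -> ones p -> ones q ->
  (forall m, (m \in mons p) = (m \in mons q)) -> peq p q.
Proof. by move=> Hid Hp Hq H m; rewrite !coef_ones // H. Qed.

Lemma mons_cat (K : comPzSemiRingType) N (p q : mpoly K N) : mons (p ++ q) = mons p ++ mons q.
Proof. exact: map_cat. Qed.

Lemma mons_flatten (K : comPzSemiRingType) N (ps : seq (mpoly K N)) :
  mons (flatten ps) = flatten (map mons ps).
Proof. by elim: ps => //= p ps IH; rewrite mons_cat IH. Qed.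

Lemma mem_mons_flatten (K : comPzSemiRingType) N (I : eqType) (l : seq I) (G : I -> mpoly K N) m :
  reflect (exists2 i, i \in l & m \in mons (G i)) (m \in mons (flatten [seq G i | i <- l])).
Proof. rewrite mons_flatten -map_comp; exact: flatten_mapP. Qed.

Lemma mons_pmul (K : comPzSemiRingType) N (p q : mpoly K N) :
  mons (pmul p q) = [seq madd a b | a <- mons p, b <- mons q].
Proof.
rewrite /pmul /mons; elim: p => //= t p IH.
by rewrite map_cat IH -!map_comp.
Qed.

Lemma mem_mons_pmul (K : comPzSemiRingType) N (p q : mpoly K N) m :
  m \in mons (pmul p q) <-> exists a b, [/\ a \in mons p, b \in mons q & m = madd a b].
Proof.
rewrite mons_pmul; split.
  by case/allpairsP => [[a b] [/= Ha Hb ->]]; exists a, b.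
by case=> a [b [Ha Hb ->]]; apply/allpairsP; exists (a, b).
Qed.

Lemma ones_cat (K : comPzSemiRingType) N (p q : mpoly K N) : ones p -> ones q -> ones (p ++ q).
Proof. by move=> Hp Hq; rewrite /ones all_cat; apply/andP. Qed.

Lemma ones_flatten (K : comPzSemiRingType) N (ps : seq (mpoly K N)) :
  all ones ps -> ones (flatten ps).
Proof. by elim: ps => //= p ps IH /andP [Hp Hps]; apply: ones_cat => //; apply: IH. Qed.

Lemma ones_flatten_map (K : comPzSemiRingType) N (I : Type) (l : seq I) (G : I -> mpoly K N) :
  (forall i, ones (G i)) -> ones (flatten [seq G i | i <- l]).
Proof. by move=> H; elim: l => //= i l IH; apply: ones_cat. Qed.

Lemma ones_pmul (K : comPzSemiRingType) N (p q : mpoly K N) : ones p -> ones q -> ones (pmul p q).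
Proof.
move=> /allP Hp /allP Hq; apply/allP => t /allpairsP [[a b] [Ha Hb ->]] /=.
by rewrite (eqP (Hp a Ha)) (eqP (Hq b Hb)) mulr1.
Qed.

Lemma ones_pone (K : comPzSemiRingType) N : ones (pone K N).
Proof. by rewrite /ones /= eqxx. Qed.
Lemma ones_pzero (K : comPzSemiRingType) N : ones (pzero K N).
Proof. by []. Qed.
Lemma ones_pvar (K : comPzSemiRingType) N (v : var N) : ones (pvar K v).
Proof. by rewrite /ones /= eqxx. Qed.

Lemma ones_ppow (K : comPzSemiRingType) N (p : mpoly K N) j : ones p -> ones (ppow p j).
Proof.
move=> Hp; elim: j => [|j IH]; first exact: ones_pone.
by rewrite /ppow iterS; apply: ones_pmul.
Qed.

Lemma mons_ppow (K : comPzSemiRingType) N (p : mpoly K N) j m :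
  m \in mons (ppow p j) <-> PowP (fun y => y \in mons p) j m.
Proof.
elim: j m => [|j IH] m.
  by rewrite /ppow /= /mons /= in_cons in_nil orbF; split => [/eqP|->].
have -> : ppow p j.+1 = pmul p (ppow p j) by [].
rewrite mem_mons_pmul /=.
split.
  by case=> a [b [Ha Hb ->]]; exists a, b; split => //; apply/IH.
by case=> y [m' [Hy Hm' ->]]; exists y, m'; split => //; apply/IH.
Qed.

Lemma mvarE N (v u : var N) : mvar v u = (u == v).
Proof. by rewrite ffunE. Qed.

Lemma emon_single N (i j : 'I_N) : emon [:: (i, j)] = mvar (vA i j).
Proof. by apply/ffunP => u; rewrite !ffunE /= addn0 eq_sym. Qed.

Lemma ed_rcons N (s : 'I_N) w j : ed (s :: rcons w j) = rcons (ed (s :: w)) (last s w, j).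
Proof. by rewrite -cats1 ed_cat cats1. Qed.

Lemma wm_eq N (s : 'I_N) w :
  wm s w = madd (madd (mvar (vc s)) (emon (ed (s :: w)))) (mvar (vb (last s w))).
Proof. by apply/ffunP => u; rewrite !maddE !mvarE ffunE. Qed.

Lemma mons_pvar (K : comPzSemiRingType) N (v : var N) m :
  (m \in mons (pvar K v)) = (m == mvar v).
Proof. by rewrite /mons /= in_cons in_nil orbF. Qed.

Lemma mons_cAk (K : comPzSemiRingType) N k (j : 'I_N) m :
  m \in mons (cAk K N k j) <-> exists s w,
    [/\ size w = k, last s w = j & m = madd (mvar (vc s)) (emon (ed (s :: w)))].
Proof.
elim: k j m => [|k IH] j m.
  rewrite /cAk /= /uc (mons_pvar K (vc j) m); constructor.
    by move=> /eqP ->; exists j, [::]; split => //; rewrite /= maddm0.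
  by case=> s [w [Hw Hl ->]]; case: w Hw Hl => // _ /= ->; rewrite maddm0.
have -> : cAk K N k.+1 j = rowA K N (cAk K N k) j by [].
split.
  case/mem_mons_flatten => i _ /mem_mons_pmul [a [b [Ha Hb ->]]].
  have [s [w [Hw Hl ->]]] := (IH i a).1 Ha.
  move: Hb; rewrite /uA mons_pvar => /eqP ->.
  exists s, (rcons w j); split.
  - by rewrite size_rcons Hw.
  - by rewrite last_rcons.
  - by rewrite ed_rcons -cats1 emon_cat emon_single Hl maddA.
case=> s [w [Hw Hl ->]].
case/lastP: w Hw Hl => [|w i] //; rewrite size_rcons last_rcons => -[Hw] Hl.
apply/mem_mons_flatten; exists (last s w); first by rewrite mem_enum.
apply/mem_mons_pmul; exists (madd (mvar (vc s)) (emon (ed (s :: w)))), (mvar (vA (last s w) j)).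
split.
- by apply/(IH (last s w)); exists s, w.
- by rewrite /uA mons_pvar.
- by rewrite Hl ed_rcons -cats1 emon_cat emon_single maddA.
Qed.

Lemma ones_cAk (K : comPzSemiRingType) N k (j : 'I_N) : ones (cAk K N k j).
Proof.
elim: k j => [|k IH] j; first exact: ones_pvar.
have -> : cAk K N k.+1 j = rowA K N (cAk K N k) j by [].
apply: ones_flatten_map => i; apply: ones_pmul => //; exact: ones_pvar.
Qed.

Lemma ones_SN (K : comPzSemiRingType) N n : ones (SN K N n).
Proof. apply: ones_flatten_map => j; apply: ones_pmul; [exact: ones_cAk | exact: ones_pvar]. Qed.

Lemma mons_SN (K : comPzSemiRingType) N n m :
  m \in mons (SN K N n) <-> exists s w, size w = n /\ m = wm s w.
Proof.
split.
  case/mem_mons_flatten => j _ /mem_mons_pmul [a [b [Ha Hb ->]]].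
  have [s [w [Hw Hl ->]]] := (mons_cAk K n j a).1 Ha.
  move: Hb; rewrite /ub mons_pvar => /eqP ->.
  by exists s, w; split => //; rewrite wm_eq Hl.
case=> s [w [Hw ->]].
apply/mem_mons_flatten; exists (last s w); first by rewrite mem_enum.
apply/mem_mons_pmul; exists (madd (mvar (vc s)) (emon (ed (s :: w)))), (mvar (vb (last s w))).
split.
- by apply/mons_cAk; exists s, w.
- by rewrite /ub mons_pvar.
- by rewrite wm_eq.
Qed.

Lemma mons_sadd (K : comPzSemiRingType) N (f g : series K N) n :
  mons (sadd f g n) = mons (f n) ++ mons (g n).
Proof. exact: mons_cat. Qed.

Lemma mem_smul (K : comPzSemiRingType) N (f g : series K N) n m :
  m \in mons (smul f g n) <-> exists i a b, [/\ i <= n, a \in mons (f i), b \in mons (g (n - i)) & m = madd a b].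
Proof.
split.
  case/mem_mons_flatten => i; rewrite mem_iota add0n ltnS => Hi /mem_mons_pmul [a [b [Ha Hb ->]]].
  by exists i, a, b.
case=> i [a [b [Hi Ha Hb ->]]]; apply/mem_mons_flatten; exists i; first by rewrite mem_iota.
by apply/mem_mons_pmul; exists a, b.
Qed.

Lemma mons_smono (K : comPzSemiRingType) N (a : mpoly K N) k i :
  mons (smono a k i) = if i == k then mons a else [::].
Proof. by rewrite /smono; case: (i == k). Qed.

Lemma mem_ssum (K : comPzSemiRingType) N rho (G : nat -> series K N) n m :
  m \in mons (ssum rho G n) <-> exists2 i, i < rho & m \in mons (G i n).
Proof.
split.
  by case/mem_mons_flatten => i; rewrite mem_iota add0n => Hi Hm; exists i.
by case=> i Hi Hm; apply/mem_mons_flatten; exists i; rewrite ?mem_iota.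
Qed.

Lemma mons_sstar (K : comPzSemiRingType) N (q : mpoly K N) c r :
  mons (sstar q c r) = if (c %| r)%N then mons (ppow q (r %/ c)) else [::].
Proof. by rewrite /sstar; case: (c %| r)%N. Qed.

Lemma ones_smul (K : comPzSemiRingType) N (f g : series K N) n :
  (forall i, ones (f i)) -> (forall i, ones (g i)) -> ones (smul f g n).
Proof. by move=> Hf Hg; apply: ones_flatten_map => i; apply: ones_pmul. Qed.

Lemma ones_ssum (K : comPzSemiRingType) N rho (G : nat -> series K N) n :
  (forall i k, ones (G i k)) -> ones (ssum rho G n).
Proof. by move=> H; apply: ones_flatten_map. Qed.

Lemma ones_smono (K : comPzSemiRingType) N (a : mpoly K N) k i : ones a -> ones (smono a k i).
Proof. by rewrite /smono; case: (i == k). Qed.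

Lemma ones_sstar (K : comPzSemiRingType) N (q : mpoly K N) c r : ones q -> ones (sstar q c r).
Proof. by move=> Hq; rewrite /sstar; case: (c %| r)%N => //; apply: ones_ppow. Qed.

Definition bnd N (D : nat) : seq (mon N) :=
  [seq [ffun v => nat_of_ord (f v)] | f : {ffun var N -> 'I_D.+1} <- enum {ffun var N -> 'I_D.+1}].

Lemma mem_bnd N D (m : mon N) : (forall v, m v <= D) -> m \in bnd N D.
Proof.
move=> H; apply/mapP; exists [ffun v => inord (m v) : 'I_D.+1]; first by rewrite mem_enum.
by apply/ffunP => v; rewrite !ffunE inordK // ltnS.
Qed.

Lemma size_bnd N D : size (bnd N D) = D.+1 ^ (N + N * N + N).
Proof. by rewrite size_map -cardE card_ffun !card_sum card_prod !card_ord. Qed.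

Lemma uniq_bound N D (s : seq (mon N)) : uniq s -> (forall m, m \in s -> forall v, m v <= D) ->
  size s <= D.+1 ^ (N + N * N + N).
Proof.
move=> Hu H; rewrite -size_bnd; apply: uniq_leq_size => // m Hm; apply: mem_bnd; exact: H.
Qed.

Lemma psize_bound (K : comPzSemiRingType) N D (p : mpoly K N) :
  (forall m, m \in mons p -> forall v, m v <= D) -> psize p <= D.+1 ^ (N + N * N + N).
Proof.
move=> H; apply: uniq_bound; first exact: undup_uniq.
move=> m; rewrite mem_undup => /mapP [t]; rewrite mem_filter => /andP [_ Ht] ->.
by apply: H; apply: map_f.
Qed.

Lemma size_ed N (s : 'I_N) w : size (ed (s :: w)) = size w.
Proof. by rewrite /ed size_zip /= minnE subSnn subn1. Qed.

Lemma wm_bound N (s : 'I_N) w v : wm s w v <= (size w).+2.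
Proof.
rewrite ffunE ffunE.
have H1 : count (fun e : 'I_N * 'I_N => vA e.1 e.2 == v) (ed (s :: w)) <= size w.
  by apply: leq_trans (count_size _ _) _; rewrite size_ed.
apply: (@leq_trans (1 + size w + 1)); last by rewrite addn1 add1n.
by apply: leq_add; [apply: leq_add|]; rewrite ?leq_b1.
Qed.

Lemma Cl_bound N (E : pred ('I_N * 'I_N)) l y : Cl E l y -> forall v, y v <= l.
Proof.
elim => [|l' y' v z _ IH _ _] u; first by rewrite mon0E.
rewrite maddE; apply: leq_add => //.
rewrite ffunE; apply: leq_trans (count_size _ _) _.
by rewrite size_ed.
Qed.

Definition asbool (P : Prop) : bool := if excluded_middle_informative P then true else false.
Lemma asboolE P : asbool P <-> P.
Proof. by rewrite /asbool; case: excluded_middle_informative. Qed.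

Definition Qlist N (F : nat) (x : mon N) : seq (mon N) :=
  [seq y <- bnd N F | asbool (Cl (esupp x) F y)].

Lemma mem_Qlist N F (x y : mon N) : y \in Qlist F x <-> Cl (esupp x) F y.
Proof.
rewrite mem_filter; split.
  by case/andP => /asboolE.
move=> H; apply/andP; split; first exact/asboolE.
by apply: mem_bnd; apply: Cl_bound H.
Qed.

Lemma expw m n e : m <= n -> m ^ e <= n ^ e.
Proof. by case: e => // e H; rewrite leq_exp2r. Qed.

Lemma fact_le_pow n : n`! <= n ^ n.
Proof.
elim: n => // n IH; rewrite factS expnS leq_mul2l; apply/orP; right.
apply: leq_trans IH _.
case: n => // n; rewrite leq_exp2r //.
Qed.

Lemma n_lt2 n : n < 2 ^ n.
Proof. by apply: ltn_expl. Qed.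

Lemma fact_le2 n : n`! <= 2 ^ (n * n).
Proof.
apply: leq_trans (fact_le_pow n) _; rewrite expnM; apply: expw; exact: ltnW (n_lt2 n).
Qed.

Lemma n4_fact n : n ^ 4 <= 14 * n`!.
Proof.
elim: n => // n IH.
case: (leqP n 3) => Hn.
  by case: n Hn {IH} => [|[|[|[|]]]].
rewrite factS mulnCA; apply: leq_trans (leq_mul (leqnn n.+1) IH).
have : (n.+1) ^ 3 <= n ^ 4.
  rewrite !expnS !expn0; nnia.
rewrite [n.+1 ^ 4]expnS => H; rewrite leq_mul2l H orbT //.
Qed.

Lemma num_bound N : 0 < N ->
  let F := N`! in let k := N * (N * N).+1 + N * N in
  k <= 400 * F /\ F * (k * F + F + 3) ^ (N + N * N + N) <= 2 ^ (400 * F).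
Proof.
move=> HN F k.
have HF : 0 < F by apply: fact_gt0.
have H4 := n4_fact N.
have Hk : k <= 3 * N ^ 4 by rewrite /k !expnS !expn0; nnia.
split; first by apply: leq_trans Hk _; nnia.
have HFb : F <= 2 ^ (N * N) := fact_le2 N.
have HN3 : N ^ 3 <= 2 ^ (3 * N).
  by rewrite mulnC expnM; apply: expw; exact: ltnW (n_lt2 N).
have Hk4 : k + 4 <= 2 ^ (3 * N + 3).
  rewrite expnD; apply: leq_trans (leq_mul HN3 (leqnn (2 ^ 3))).
  rewrite /k !expnS !expn0. nnia.
have Hb : k * F + F + 3 <= 2 ^ (3 * N + 3 + N * N).
  apply: (@leq_trans ((k + 4) * F)); first by nnia.
  by rewrite expnD; apply: leq_mul.
have Hexp : N * N + (3 * N + 3 + N * N) * (N + N * N + N) <= 400 * F.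
  apply: (@leq_trans (22 * N ^ 4)); first by rewrite !expnS !expn0; nnia.
  nnia.
apply: (@leq_trans (2 ^ (N * N) * (2 ^ (3 * N + 3 + N * N)) ^ (N + N * N + N))).
  by apply: leq_mul => //; apply: expw.
by rewrite -expnM -expnD leq_exp2l.
Qed.

Lemma PowP_impl N (Q1 Q2 : mon N -> Prop) j m :
  (forall y, Q1 y -> Q2 y) -> PowP Q1 j m -> PowP Q2 j m.
Proof.
move=> H; elim: j m => [|j IH] m //=.
by case=> y [m' [Hy Hm ->]]; exists y, m'; split => //; [apply: H | apply: IH].
Qed.

Lemma mons_ones_list (K : comPzSemiRingType) N (l : seq (mon N)) :
  mons ([seq (y, 1%R) | y <- l] : mpoly K N) = l.
Proof. by elim: l => //= a l IH; rewrite /mons /= -/(mons _) IH. Qed.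

Lemma ones_ones_list (K : comPzSemiRingType) N (l : seq (mon N)) :
  ones ([seq (y, 1%R) | y <- l] : mpoly K N).
Proof. by elim: l => //= a l IH; rewrite eqxx. Qed.

Lemma sumn_bound (l : seq nat) B : (forall x, x \in l -> x <= B) -> sumn l <= size l * B.
Proof.
elim: l => //= a l IH H; rewrite mulSn; apply: leq_add; first by apply: H; rewrite mem_head.
by apply: IH => x Hx; apply: H; rewrite in_cons Hx orbT.
Qed.

Theorem main_thm :
  exists C : nat, (0 < C)%N /\
  forall (K : comPzSemiRingType) (N : nat),
    (forall x : K, (x + x = x)%R) -> (1 <= N)%N ->
    exists (kappa1 rho : nat) (mu : nat -> nat) (u q : nat -> mpoly K N)
           (P : series K N),
      [/\ (kappa1 <= C * N`!)%N /\ (rho <= 2 ^ (C * N`!))%N,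
          (forall i, (i < rho)%N -> (mu i <= N`! - 1)%N),
          (forall n, (kappa1 * N`! <= n)%N -> P n = pzero K N),
          (forall n,
             peq (SN K N n)
               (sadd P (smul (smono (pone K N) (kappa1 * N`!))
                  (ssum rho (fun i => smul (smono (u i) (mu i)) (sstar (q i) N`!)))) n))
        & (forall i, (i < kappa1 * N`!)%N -> (psize (P i) <= 2 ^ (C * N`!))%N) /\
          (forall i, (i < rho)%N ->
             (psize (u i) <= 2 ^ (C * N`!))%N /\ (psize (q i) <= 2 ^ (C * N`!))%N)].
Proof.
exists 400; split => // K N Hid HN.
have [HkC Hbig] := @num_bound N HN.
set F := N`! in HkC Hbig *.
set k := N * (N * N).+1 + N * N in HkC Hbig *.
set V := N + N * N + N in Hbig.
have HF : 0 < F by apply: fact_gt0.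
have Hdiv : forall l, 0 < l <= N -> l %| F by move=> l Hl; apply: dvdn_fact.
pose T := k * F.
pose D := T + F + 2.
pose X mu := undup (mons (SN K N (T + mu))).
pose pcs := flatten [seq [seq (mu, x) | x <- X mu] | mu <- iota 0 F].
pose d0 := (0, mon0 N).
pose rho := size pcs.
pose mu i := (nth d0 pcs i).1.
pose u i : mpoly K N := [:: ((nth d0 pcs i).2, 1%R)].
pose q i : mpoly K N := [seq (y, 1%R) | y <- Qlist F (nth d0 pcs i).2].
pose P n := if n < T then SN K N n else pzero K N.
have mem_pcs : forall mu0 x, ((mu0, x) \in pcs) = (mu0 < F) && (x \in X mu0).
  move=> mu0 x; apply/flatten_mapP/andP.
    case=> mu1; rewrite mem_iota add0n => Hmu1 /mapP [x1 Hx1 [-> ->]]; by split.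
  case=> H1 H2; exists mu0; first by rewrite mem_iota.
  by apply/mapP; exists x.
have HX : forall mu0 x, x \in X mu0 -> exists s w, size w = T + mu0 /\ x = wm s w.
  by move=> mu0 x; rewrite mem_undup => /mons_SN.
have Hnth : forall i, i < rho -> (mu i < F) && ((nth d0 pcs i).2 \in X (mu i)).
  move=> i Hi; rewrite -mem_pcs /mu -surjective_pairing; exact: mem_nth.
have HXb : forall mu0 x, mu0 < F -> x \in X mu0 -> forall v, x v <= D.
  move=> mu0 x Hmu /HX [s [w [Hw ->]]] v; apply: leq_trans (wm_bound s w v) _.
  by rewrite Hw /D; nlia.
have HB1 : D.+1 ^ V <= 2 ^ (400 * F).
  apply: leq_trans Hbig; have -> : D.+1 = k * F + F + 3 by rewrite /D /T; nlia.
  exact: leq_pmull.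
exists k, rho, mu, u, q, P; split.
- split => //.
  apply: leq_trans Hbig.
  rewrite /rho /pcs size_flatten /shape -map_comp.
  apply: leq_trans (sumn_bound (B := D.+1 ^ V) _) _.
    move=> x /mapP [mu0]; rewrite mem_iota add0n => Hmu ->.
    rewrite /= size_map /V; apply: uniq_bound; first exact: undup_uniq.
    by move=> m Hm; apply: (HXb mu0).
  rewrite size_map size_iota; apply: leq_mul => //.
  by have -> : D.+1 = k * F + F + 3 by rewrite /D /T; nlia.
- move=> i Hi; have := Hnth i Hi; case/andP => H _; nlia.
- by move=> n Hn; rewrite /P ltnNge Hn.
- move=> n; apply: peq_ones => //.
  + exact: ones_SN.
  + apply: ones_cat; first by rewrite /P; case: (n < T); [exact: ones_SN|].
    apply: ones_smul => i; first by apply: ones_smono; exact: ones_pone.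
    apply: ones_ssum => i' k'; apply: ones_smul => t.
      by apply: ones_smono; rewrite /u /ones /= eqxx.
    by apply: ones_sstar; exact: ones_ones_list.
  + move=> m; rewrite mons_sadd mem_cat.
    have HG : m \in mons (smul (smono (pone K N) (k * F))
        (ssum rho (fun i => smul (smono (u i) (mu i)) (sstar (q i) F))) n) <->
        (T <= n /\ exists i, [/\ i < rho, mu i <= n - T, F %| (n - T - mu i) &
           exists b, PowP (Cl (esupp (nth d0 pcs i).2) F) ((n - T - mu i) %/ F) b /\
                     m = madd (nth d0 pcs i).2 b]).
      split.
        case/mem_smul => i [a [b [Hi Ha Hb ->]]].
        move: Ha; rewrite mons_smono; case: eqP => [Hie|_] //.
        rewrite /mons /= in_cons in_nil orbF => /eqP ->; rewrite madd0m.
        subst i; split => //.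
        case/mem_ssum: Hb => i' Hi' /mem_smul [t [a' [b' [Ht Ha' Hb' ->]]]].
        move: Ha'; rewrite mons_smono; case: eqP => [Hte|_] //.
        rewrite /u /mons /= in_cons in_nil orbF => /eqP ->.
        move: Hb'; rewrite mons_sstar; case: ifP => [Hd|_] //.
        move/mons_ppow => HP.
        exists i'; rewrite -Hte; split => //.
        exists b'; split => //.
        apply: PowP_impl HP => y; rewrite /q mons_ones_list; exact: (mem_Qlist _ _ _).1.
      case=> HnT [i [Hi Hmu Hd [b [HP ->]]]].
      apply/mem_smul; exists T, (mon0 N), (madd (nth d0 pcs i).2 b); split => //.
        by rewrite mons_smono eqxx /mons /= in_cons eqxx.
        apply/mem_ssum; exists i => //.
        apply/mem_smul; exists (mu i), (nth d0 pcs i).2, b; split => //.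
          by rewrite mons_smono eqxx /u /mons /= in_cons eqxx.
        rewrite mons_sstar Hd; apply/mons_ppow.
        apply: PowP_impl HP => y Hy; rewrite /q mons_ones_list; exact/mem_Qlist.
      by rewrite madd0m.
    case: (ltnP n T) => HnT.
    * rewrite /P HnT; apply/idP/idP => [->//|/orP [//|/HG [H _]]].
      by move: H; rewrite leqNgt HnT.
    * rewrite /P ltnNge HnT /=; apply/idP/idP.
        move/mons_SN => [s [w [Hw Hm]]].
        apply/HG; split => //.
        pose r := n - T.
        have Hr : size w = (T + r %% F) + (r %/ F) * F.
          have := divn_eq r F; rewrite Hw /r; nlia.
        have HL : N * (N * N).+1 + N * (N * F) <= T + r %% F.
          apply: leq_trans (leq_addr _ _); rewrite /T /k mulnDl.
          apply: leq_add; first exact: leq_pmulr.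
          by rewrite mulnA.
        have [w0 [s' [K1 K2 K3 K4]]] := walk_pow s HN HF Hdiv HL Hr.
        have Hx : wm s w0 \in X (r %% F) by rewrite mem_undup; apply/mons_SN; exists s, w0.
        have Hp : (r %% F, wm s w0) \in pcs by rewrite mem_pcs Hx ltn_pmod.
        have Hrr : r - r %% F = r %/ F * F by rewrite {1}(divn_eq r F) addnK.
        exists (index (r %% F, wm s w0) pcs); rewrite /mu nth_index //=; split.
        - by rewrite index_mem.
        - exact: leq_mod.
        - by rewrite -/r Hrr dvdn_mull.
        - by exists s'; rewrite -/r Hrr mulnK // Hm K4.
      case/HG => _ [i [Hi Hmu Hd [b [HP ->]]]].
      have /andP [H1 H2] := Hnth i Hi.
      have [s [w [Hw Hx]]] := HX _ _ H2.
      rewrite Hx in HP *.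
      have [w' [K1 K2 K3]] := pow_walk HP.
      apply/mons_SN; exists s, w'; split => //.
      rewrite K1 Hw divnK //; nlia.
- split.
    move=> i Hi; rewrite /P Hi.
    apply: leq_trans HB1; apply: psize_bound => m /mons_SN [s [w [Hw ->]]] v.
    apply: leq_trans (wm_bound s w v) _; rewrite Hw /D; nlia.
  move=> i Hi; have /andP [H1 H2] := Hnth i Hi; split.
    apply: leq_trans HB1; apply: psize_bound => m.
    rewrite /u /mons /= in_cons in_nil orbF => /eqP ->; exact: HXb H1 H2.
  apply: leq_trans HB1; apply: psize_bound => m.
  rewrite /q mons_ones_list => /mem_Qlist /Cl_bound Hm v; apply: leq_trans (Hm v) _.
  rewrite /D; nlia.
Qed.


Local Open Scope ring_scope.

Theorem corollary2 :
  exists C : nat, (0 < C)%N /\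
  forall (K : comPzSemiRingType) (N : nat),
    (forall x : K, x + x = x) -> (1 <= N)%N ->
    exists (kappa1 rho : nat) (mu : nat -> nat) (u q : nat -> mpoly K N)
           (P : series K N),
      [/\ (kappa1 <= C * N`!)%N /\ (rho <= 2 ^ (C * N`!))%N,
          (forall i, (i < rho)%N -> (mu i <= N`! - 1)%N),
          (forall n, (kappa1 * N`! <= n)%N -> P n = pzero K N),
          (forall n,
             peq (SN K N n)
               (sadd P (smul (smono (pone K N) (kappa1 * N`!))
                  (ssum rho (fun i => smul (smono (u i) (mu i)) (sstar (q i) N`!)))) n))
        & (forall i, (i < kappa1 * N`!)%N -> (psize (P i) <= 2 ^ (C * N`!))%N) /\
          (forall i, (i < rho)%N ->
             (psize (u i) <= 2 ^ (C * N`!))%N /\ (psize (q i) <= 2 ^ (C * N`!))%N)].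
Proof. exact: main_thm. Qed.
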